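(* Let $\mathcal{U}=\{1,\dots,K\}$ be a set of $K\ge 1$ users (UEs) and let $\mathcal{B}=\mathcal{T}\cup\mathcal{S}$ be a finite set of base stations partitioned into a set $\mathcal{T}$ of terrestrial base stations and a set $\mathcal{S}$ of satellite base stations. Let $x_{ij}\in\{0,1\}$ ($i\in\mathcal{U}$, $j\in\mathcal{B}$) be a fixed association, with each UE associated to exactly one base station ($\sum_{j\in\mathcal{B}}x_{ij}=1$ for every $i$), and let $r_{ij}>0$ be fixed constants not depending on $\varepsilon$. For $\varepsilon\in[0,1]$ define the throughput of UE $i$ as $$R_i(\varepsilon)=\sum_{j\in\mathcal{S}}\varepsilon\,x_{ij}r_{ij}+\sum_{j\in\mathcal{T}}(1-\varepsilon)\,x_{ij}r_{ij},$$ and the utility $f(\varepsilon)=\sum_{i\in\mathcal{U}}\log R_i(\varepsilon)$ (with $\log 0=-\infty$), in which all UEs are weighted equally. Let $K_{\mathcal{S}}$ denote the number of UEs associated to a satellite base station, i.e. $K_{\mathcal{S}}=\#\{i\in\mathcal{U}:\ x_{ij}=1\text{ for some } j\in\mathcal{S}\}$. Then the optimal bandwidth fraction allocated to the satellite tier, i.e. the maximizer of $f$ over $\varepsilon\in[0,1]$, is $$\varepsilon^*=\frac{K_{\mathcal{S}}}{K}.$$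
   Context: Model: a total bandwidth $W$ is split orthogonally, a fraction $\varepsilon$ going to all satellite base stations and a fraction $1-\varepsilon$ to all terrestrial base stations; the quantity $r_{ij}=\frac{W}{k_j}\log_2(1+\gamma_{ij})$ (with $k_j$ the number of UEs served by base station $j$ and $\gamma_{ij}$ the SINR, both independent of $\varepsilon$) is the throughput UE $i$ would obtain from base station $j$ if that base station's tier were given the whole bandwidth. ''All UEs have the same requirements'' corresponds to the unweighted sum of logarithms in $f$. *)

(* Defs.v *)
From HB Require Import structures.
From mathcomp Require Import all_boot all_order all_algebra.
From mathcomp Require Import all_classical all_reals all_analysis.
Set Implicit Arguments. Unset Strict Implicit. Unset Printing Implicit Defensive.
Import Order.TTheory GRing.Theory Num.Theory.
Local Open Scope ring_scope.

(* Users are 'I_K, base stations a finType B; [sat j] means j is a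
   satellite BS (j \in S), otherwise terrestrial (j \in T).
   x i j in {0,1} is the association, r i j > 0 the full-band rates. *)

Definition throughput (R : realType) (K : nat) (B : finType) (sat : pred B)
  (x r : 'I_K -> B -> R) (eps : R) (i : 'I_K) : R :=
  \sum_(j | sat j) eps * x i j * r i j
  + \sum_(j | ~~ sat j) (1 - eps) * x i j * r i j.

Definition elog (R : realType) (t : R) : \bar R :=
  if 0 < t then (ln t)%:E else -oo%E.

Definition utility (R : realType) (K : nat) (B : finType) (sat : pred B)
  (x r : 'I_K -> B -> R) (eps : R) : \bar R :=
  (\sum_(i < K) elog (throughput sat x r eps i))%E.

Definition K_sat (R : realType) (K : nat) (B : finType) (sat : pred B)
  (x : 'I_K -> B -> R) : nat :=
  #|[set i : 'I_K | [exists j, sat j && (x i j == 1)]]|.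

(* Main.v *)
Require Import Defs.
From HB Require Import structures.
From mathcomp Require Import all_boot all_order all_algebra.
From mathcomp Require Import all_classical all_reals all_analysis.
From mathcomp Require Import ring lra.
Import Order.TTheory GRing.Theory Num.Theory.
Local Open Scope ring_scope.
Lemma ln_le_sub1 (R : realType) (t : R) : 0 < t -> ln t <= t - 1.
Proof.
move=> t0; have := expR_ge1Dx (ln t); rewrite lnK ?posrE // => h.
by rewrite lerBrDl.
Qed.

Lemma ln_lt_sub1 (R : realType) (t : R) : 0 < t -> t != 1 -> ln t < t - 1.
Proof.
move=> t0 t1; have : ln t != 0.
  apply/negP => /eqP h; move/eqP: t1; apply.
  by rewrite -(lnK (x:=t)) ?posrE // h expR0.
move=> /expR_gt1Dx; rewrite lnK ?posrE // => h.
by rewrite ltrBrDl.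
Qed.

Lemma user_form (R : realType) (K : nat) (B : finType) (sat : pred B)
  (x r : 'I_K -> B -> R)
  (hx01 : forall i j, x i j = 0 \/ x i j = 1)
  (hxsum : forall i, \sum_(j : B) x i j = 1)
  (hr : forall i j, 0 < r i j) (i : 'I_K) :
  exists sc : bool * R, 0 < sc.2 /\ sc.1 = [exists j, sat j && (x i j == 1)]
    /\ forall e, throughput sat x r e i = (if sc.1 then e else 1 - e) * sc.2.
Proof.
have [j0 hj0] : exists j0, x i j0 = 1.
  case: (pselect (exists j0, x i j0 = 1)) => // nex; exfalso.
  have : \sum_j x i j = 0.
    by apply: big1 => j _; case: (hx01 i j) => // h; case: nex; exists j.
  by rewrite hxsum => /eqP; rewrite oner_eq0.
have hz : forall j, j != j0 -> x i j = 0.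
  have := hxsum i; rewrite (bigD1 j0) //= hj0 => /(canRL (addKr 1)); rewrite addNr.
  move=> hs j hj; apply: (psumr_eq0P _ hs) => // k _.
  by case: (hx01 i k) => ->.
exists (sat j0, r i j0); split => //=; split.
  apply/idP/existsP => [sj|[j /andP[sj /eqP xj]]].
    by exists j0; rewrite sj hj0 eqxx.
  case: (eqVneq j j0) => [<-//|ne]; move: xj; rewrite hz //.
  by move/eqP; rewrite eq_sym oner_eq0.
move=> e; rewrite /throughput.
pose F j := (if sat j then e else 1 - e) * x i j * r i j.
have -> : \sum_(j | sat j) e * x i j * r i j = \sum_(j | sat j) F j.
  by apply: eq_bigr => j sj; rewrite /F sj.
have -> : \sum_(j | ~~ sat j) (1 - e) * x i j * r i j = \sum_(j | ~~ sat j) F j.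
  by apply: eq_bigr => j /negbTE sj; rewrite /F sj.
have hsplit : \sum_j F j = \sum_(j | sat j) F j + \sum_(j | ~~ sat j) F j.
  by rewrite (bigID sat).
rewrite -hsplit (bigD1 j0) //= big1 ?addr0.
  by rewrite /F hj0 mulr1.
by move=> j hj; rewrite /F hz // mulr0 mul0r.
Qed.
Lemma sum_if (R : realType) K (s : 'I_K -> bool) (a b : R) :
  \sum_(i < K) (if s i then a else b) =
  #|[set i | s i]|%:R * a + #|~: [set i | s i]|%:R * b.
Proof.
rewrite (bigID s) /=.
have -> : \sum_(i < K | s i) (if s i then a else b) = \sum_(i in [set i | s i]) a.
  by apply: eq_big => [i|i ->]; rewrite ?inE.
have -> : \sum_(i < K | ~~ s i) (if s i then a else b) = \sum_(i in ~: [set i | s i]) b.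
  by apply: eq_big => [i|i /negbTE ->]; rewrite ?inE.
by rewrite !sumr_const !mulr_natl.
Qed.

Lemma main_abs (R : realType) (K : nat) (hK : (1 <= K)%N) (s : 'I_K -> bool)
  (c : 'I_K -> R) (hc : forall i, 0 < c i) (T : R -> 'I_K -> R)
  (hT : forall e i, T e i = (if s i then e else 1 - e) * c i) :
  let p := (#|[set i | s i]|%:R / K%:R : R) in
  0 <= p <= 1 /\
  (\sum_(i < K) elog (T p i) = (\sum_(i < K) ln (T p i))%:E)%E /\
  forall e, 0 <= e <= 1 -> exists d : R, 0 <= d /\ (d <= 0 -> e = p) /\
    (\sum_(i < K) elog (T e i) <= (\sum_(i < K) ln (T p i) - d)%:E)%E.
Proof.
move=> p.
set A := [set i | s i].
set k : R := #|A|%:R. set n : R := K%:R.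
have n0 : 0 < n by rewrite ltr0n.
have hnk : n - k = #|~: A|%:R.
  have := cardsC A; rewrite card_ord => hc'.
  have -> : n = (#|A| + #|~: A|)%:R by rewrite /n hc'.
  by rewrite /k natrD addrC addKr.
have h1p : 1 - p = #|~: A|%:R / n.
  by rewrite -hnk /p -/k -/n; field; rewrite gt_eqF.
have hp1 : forall i, s i -> 0 < p.
  move=> i si; rewrite /p divr_gt0 // ltr0n card_gt0; apply/set0Pn; exists i.
  by rewrite inE.
have hp2 : forall i, ~~ s i -> 0 < 1 - p.
  move=> i si; rewrite h1p divr_gt0 // ltr0n card_gt0; apply/set0Pn; exists i.
  by rewrite !inE.
have prange : 0 <= p <= 1.
  apply/andP; split; first by rewrite /p divr_ge0.
  by rewrite -subr_ge0 h1p divr_ge0 // ltW.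
have hTp : forall i, 0 < T p i.
  move=> i; rewrite hT; case si: (s i).
    by rewrite mulr_gt0 // (hp1 i si).
  by rewrite mulr_gt0 // (hp2 i (negbT si)).
have hsum : forall a b : R, \sum_(i < K) (if s i then a else b) = k * a + (n - k) * b.
  by move=> a b; rewrite sum_if hnk.
split => //; split.
  rewrite -sumEFin; apply: eq_bigr => i _.
  by rewrite /elog hTp.
move=> e /andP[e0 e1].
pose t i := T e i / T p i.
have ht : forall i, t i = if s i then e / p else (1 - e) / (1 - p).
  move=> i; rewrite /t !hT; case si: (s i).
    have := hp1 i si; have := hc i => h1 h2.
    by field; rewrite ?gt_eqF //  mulf_neq0 // gt_eqF.
  have := hp2 i (negbT si); have := hc i => h1 h2.
  by field; rewrite ?gt_eqF //  mulf_neq0 // gt_eqF.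
have hst : \sum_(i < K) t i <= n.
  rewrite (eq_bigr _ (fun i _ => ht i)) hsum.
  rewrite [leRHS](_ : n = n * e + n * (1 - e)); last by ring.
  apply: lerD.
    case: (eqVneq k 0) => [->|k0]; first by rewrite mul0r mulr_ge0 // ltW.
    rewrite le_eqVlt; apply/orP; left; apply/eqP.
    rewrite /p -/k -/n; field; rewrite k0 gt_eqF //.
  case: (eqVneq (n - k) 0) => [->|k0]; first by rewrite mul0r mulr_ge0 ?subr_ge0 // ltW.
  rewrite le_eqVlt; apply/orP; left; apply/eqP.
  rewrite h1p -hnk; field; rewrite k0 gt_eqF //.
pose d i := if 0 < T e i then t i - 1 - ln (t i) else 1.
have hd0 : forall i, 0 <= d i.
  move=> i; rewrite /d; case: ifP => // h.
  rewrite subr_ge0 ln_le_sub1 // divr_gt0 //.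
have hbound : forall i, (elog (T e i) <= (ln (T p i) + (t i - 1) - d i)%:E)%E.
  move=> i; rewrite /elog /d; case: ifP => h; last by rewrite leNye.
  have -> : T e i = T p i * t i by rewrite /t mulrC divfK // gt_eqF.
  rewrite lnM ?posrE // ?divr_gt0 //.
  rewrite lee_fin; lra.
have i0 : 'I_K := Ordinal hK.
exists (d i0); split => //; split.
  move=> dle; have : d i0 = 0 by apply/le_anti; rewrite dle hd0.
  rewrite /d; case: ifP => h; last by move=> /eqP; rewrite oner_eq0.
  move=> /eqP; rewrite subr_eq0 => /eqP hh.
  have tpos : 0 < t i0 by rewrite divr_gt0.
  have t1 : t i0 = 1.
    apply/eqP; apply: contraT => ne.
    by have := @ln_lt_sub1 R _ tpos ne; rewrite hh ltxx.
  move: t1; rewrite ht; case si: (s i0).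
    have := hp1 i0 si => pp /(congr1 (fun z => z * p)).
    by rewrite divfK ?mul1r // gt_eqF.
  have := hp2 i0 (negbT si) => pp /(congr1 (fun z => z * (1 - p))).
  rewrite divfK ?mul1r ?gt_eqF // => h2; lra.
apply: (le_trans (lee_sum _ (fun i _ => hbound i))).
rewrite sumEFin lee_fin big_split /= big_split /=.
have hD : d i0 <= \sum_(i < K) d i.
  by rewrite (bigD1 i0) //= lerDl sumr_ge0.
have E1 : \sum_(i < K) (t i - 1) = \sum_(i < K) t i - n.
  by rewrite big_split /= sumrN sumr_const card_ord.
rewrite E1 sumrN.
lra.
Qed.

Local Open Scope classical_set_scope.

Theorem proposition2 (R : realType) (K : nat) (B : finType) (sat : pred B)
  (x r : 'I_K -> B -> R)
  (hK : (1 <= K)%N)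
  (hx01 : forall i j, x i j = 0 \/ x i j = 1)
  (hxsum : forall i, \sum_(j : B) x i j = 1)
  (hr : forall i j, 0 < r i j) :
  [set e : R | 0 <= e <= 1 /\
     (forall e' : R, 0 <= e' <= 1 ->
        (utility sat x r e' <= utility sat x r e)%E)]
  = [set ((K_sat sat x)%:R / K%:R : R)].
Proof.
have := fun i => @user_form R K B sat x r hx01 hxsum hr i.
move/choice => [f hf].
pose s i := (f i).1; pose c i := (f i).2.
have hKs : K_sat sat x = #|[set i | s i]|%SET.
  rewrite /K_sat; apply: eq_card => i; rewrite !inE.
  by case: (hf i) => _ [h _]; rewrite /s h.
have hc : forall i, 0 < c i by move=> i; case: (hf i).
have hT : forall e i, throughput sat x r e i = (if s i then e else 1 - e) * c i.
  by move=> e i; case: (hf i) => _ [_ ->].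
have [prange [hUp hmain]] := @main_abs R K hK s c hc _ hT.
rewrite hKs; apply/seteqP; split => e /=.
  move=> [he hmax].
  have [d [d0 [dp hb]]] := hmain e he.
  apply: dp; have := hmax _ prange; rewrite /utility hUp => hle.
  by have := le_trans hle hb; rewrite lee_fin; lra.
move=> ->; split => // e' he'.
have [d [d0 [dp hb]]] := hmain e' he'.
rewrite /utility hUp; apply: (le_trans hb); rewrite lee_fin; lra.
Qed.
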